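(* For $\beta\in(0,\tfrac14)$ and $\tau>0$, write $S=\sinh(2\tau)$, $C=\cosh(2\tau)$ and define $$\lambda_1^-(\beta,\tau)=\frac1\beta\Big[\frac{6S(1+C)}{(C-1)^2}-6\sqrt{\frac{S^2(1+C)^2}{(C-1)^4}-2\beta\frac{\cosh(4\tau)-C}{(C-1)^2}}\Big],\qquad \lambda_0^+(\beta,\tau)=\frac4\beta\,\frac{S}{1-C+\tau S}.$$ Then for every $\beta\in(0,\tfrac14)$ there are values $\tau^-,\tau^*,\tau^+>0$ such that $\lambda_0^+>\lambda_1^-$ at $\tau=\tau^-$, $\lambda_1^->\lambda_0^+$ at $\tau=\tau^+$, and $\lambda_1^-=\lambda_0^+$ at $\tau=\tau^*$.
   Context: These are, with $\beta=\alpha(1-\alpha)$, the smaller root of the $\ell=1$ eigenvalue equation and the positive $\ell=0$ eigenvalue for the fourth-order Steklov-type problem ($P_gu=0$, $B^1_gu=0$, $B^3_gu=\lambda u$) on the annulus $[0,\tau]\times\mathbb S^3$ with a radial conformally flat metric normalized so that $e^{3f(0)}=\alpha$, $e^{3f(\tau)}=1-\alpha$. *)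

(* Defs.v *)
From Stdlib Require Import Reals.
Open Scope R_scope.

Definition lam1m (beta tau : R) : R :=
  let S := sinh (2 * tau) in
  let C := cosh (2 * tau) in
  / beta * (6 * S * (1 + C) / (C - 1) ^ 2
            - 6 * sqrt (S ^ 2 * (1 + C) ^ 2 / (C - 1) ^ 4
                        - 2 * beta * (cosh (4 * tau) - C) / (C - 1) ^ 2)).

Definition lam0p (beta tau : R) : R :=
  let S := sinh (2 * tau) in
  let C := cosh (2 * tau) in
  4 / beta * (S / (1 - C + tau * S)).

(* Main.v *)
Require Import Defs.
From Stdlib Require Import Reals Lra Psatz.
Open Scope R_scope.
Definition kk (t : R) : R := cosh t / sinh t.
Definition AA (b t : R) : R := kk t ^ 6 - b * (3 * kk t ^ 2 + 1).
Definition gg (b t : R) : R :=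
  6 / b * (kk t ^ 3 - sqrt (AA b t)) - 4 / b * (kk t / (t * kk t - 1)).

Lemma cont_pow f x n : continuity_pt f x -> continuity_pt (fun t => f t ^ n) x.
Proof.
  intro H. induction n.
  - simpl. apply continuity_pt_const. intros a c; reflexivity.
  - simpl. apply continuity_pt_mult; auto.
Qed.

Lemma cont_kk x : 0 < x -> continuity_pt kk x.
Proof.
  intro Hx. unfold kk. apply continuity_pt_div.
  - apply derivable_continuous_pt, derivable_pt_cosh.
  - apply derivable_continuous_pt, derivable_pt_sinh.
  - rewrite <- sinh_0. apply Rgt_not_eq. apply sinh_lt. lra.
Qed.

Lemma cont_gg b x : 0 < x -> 0 < AA b x -> x * kk x - 1 <> 0 -> continuity_pt (gg b) x.
Proof.
  intros Hx HA HD. unfold gg.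
  apply continuity_pt_minus.
  - apply continuity_pt_mult. apply continuity_pt_const. intros a c; reflexivity.
    apply continuity_pt_minus. apply cont_pow, cont_kk; auto.
    apply (continuity_pt_comp (AA b) sqrt). 
    + unfold AA. apply continuity_pt_minus. apply cont_pow, cont_kk; auto.
      apply continuity_pt_mult. apply continuity_pt_const. intros a c; reflexivity.
      apply continuity_pt_plus. apply continuity_pt_mult. apply continuity_pt_const. intros a c; reflexivity.
      apply cont_pow, cont_kk; auto.
      apply continuity_pt_const. intros a c; reflexivity.
    + apply continuity_pt_sqrt. lra.
  - apply continuity_pt_mult. apply continuity_pt_const. intros a c; reflexivity.
    apply continuity_pt_div. apply cont_kk; auto.
    apply continuity_pt_minus. apply continuity_pt_mult. apply derivable_continuous_pt, derivable_pt_id. apply cont_kk; auto.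
    apply continuity_pt_const. intros a c; reflexivity.
    auto.
Qed.
Lemma sinh_pos t : 0 < t -> 0 < sinh t.
Proof. intro. rewrite <- sinh_0. apply sinh_lt. lra. Qed.

Lemma tanh_lt t : 0 < t -> sinh t < t * cosh t.
Proof.
  intro Ht.
  destruct (MVT_cor2 (fun x => x * cosh x - sinh x) (fun x => x * sinh x) 0 t Ht)
    as [c [Hc1 Hc2]].
  - intros c _.
    replace (c * sinh c) with ((1 * cosh c + c * sinh c) - cosh c) by ring.
    apply derivable_pt_lim_minus.
    apply derivable_pt_lim_mult. apply derivable_pt_lim_id. apply derivable_pt_lim_cosh.
    apply derivable_pt_lim_sinh.
  - rewrite sinh_0, cosh_0 in Hc1.
    assert (0 < c * sinh c * (t - 0)).
    { apply Rmult_lt_0_compat; [apply Rmult_lt_0_compat|]; try lra. apply sinh_pos; lra. }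
    lra.
Qed.

Lemma kk_gt t : 0 < t -> 1 < t * kk t /\ 1 < kk t.
Proof.
  intro Ht. pose proof (sinh_pos t Ht). pose proof (tanh_lt t Ht).
  unfold kk. split.
  - apply (Rmult_lt_reg_r (sinh t)); auto. field_simplify; lra.
  - apply (Rmult_lt_reg_r (sinh t)); auto. field_simplify; try lra.
    unfold sinh, cosh. pose proof (exp_pos (-t)). lra.
Qed.
Lemma alg (q b : R) : 1 < q ->
  let C := (q + /q)/2 in let S := (q - /q)/2 in let C4 := (q^2 + /q^2)/2 in
  let k := (q+1)/(q-1) in
  6*S*(1+C)/(C-1)^2 = 6*k^3 /\
  S^2*(1+C)^2/(C-1)^4 - 2*b*(C4-C)/(C-1)^2 = k^6 - b*(3*k^2+1) /\
  S = (C-1)*k /\ 0 < C - 1.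
Proof.
  intros Hq C S C4 k.
  assert (HC : C - 1 = (q-1)^2/(2*q)) by (unfold C; field; lra).
  assert (Hq1 : q - 1 <> 0) by lra.
  assert (Hq0 : q <> 0) by lra.
  assert (HCp : 0 < C - 1).
  { rewrite HC. apply Rdiv_lt_0_compat; nra. }
  assert (HCn : C - 1 <> 0) by lra.
  split; [|split; [|split]]; auto.
  - rewrite HC. unfold S, C, k. field. auto.
  - rewrite HC. unfold S, C, C4, k. field. auto.
  - rewrite HC. unfold S, k. field. auto.
Qed.

Lemma conv b t : 0 < b -> 0 < t -> t * kk t - 1 <> 0 ->
  lam1m b t = 6 / b * (kk t ^ 3 - sqrt (kk t ^ 6 - b * (3 * kk t ^ 2 + 1))) /\
  lam0p b t = 4 / b * (kk t / (t * kk t - 1)).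
Proof.
  intros Hb Ht HD.
  set (E := exp t).
  assert (HE : 1 < E) by (unfold E; rewrite <- exp_0; apply exp_increasing; lra).
  set (q := E * E).
  assert (Hq : 1 < q) by (unfold q; nra).
  assert (e2 : exp (2 * t) = q) by (unfold q, E; replace (2*t) with (t+t) by ring; apply exp_plus).
  assert (e4 : exp (4 * t) = q ^ 2) by (rewrite <- e2; replace (4*t) with (2*t+2*t) by ring; rewrite exp_plus; ring).
  assert (HC : cosh (2 * t) = (q + /q)/2) by (unfold cosh; rewrite exp_Ropp, e2; reflexivity).
  assert (HS : sinh (2 * t) = (q - /q)/2) by (unfold sinh; rewrite exp_Ropp, e2; reflexivity).
  assert (HC4 : cosh (4 * t) = (q^2 + /q^2)/2) by (unfold cosh; rewrite exp_Ropp, e4; reflexivity).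
  assert (Hk : kk t = (q+1)/(q-1)).
  { unfold kk, cosh, sinh. rewrite exp_Ropp. fold E. unfold q. field. split; nra. }
  destruct (alg q b Hq) as [H1 [H2 [H3 H4]]].
  unfold lam1m, lam0p. cbv zeta. rewrite HC, HS, HC4, Hk. rewrite Hk in HD.
  split.
  - rewrite <- H2. cbv zeta in H1. rewrite H1. field. split; lra.
  - f_equal. rewrite H3.
    assert (Hq1 : q - 1 <> 0) by lra.
    assert (HD' : t * (q + 1) - (q - 1) <> 0).
    { intro Z. apply HD.
      replace (t * ((q + 1) / (q - 1)) - 1) with ((t * (q + 1) - (q - 1)) / (q - 1)) by (field; auto).
      rewrite Z. unfold Rdiv. ring. }
    field. repeat split; auto; try lra.
    replace ((q * 2 - (q * q + 1)) * (q - 1) + t * ((q * q + 1 - q * 2) * (q + 1)))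
      with ((q-1)^2 * (t * (q + 1) - (q - 1))) by ring.
    apply Rmult_integral_contrapositive_currified; auto. apply pow_nonzero; auto.
Qed.
Lemma bnds k b : 1 < k -> 0 < b < 1/4 ->
  0 < k ^ 6 - b * (3 * k ^ 2 + 1) /\
  9 / k <= 6 / b * (k ^ 3 - sqrt (k ^ 6 - b * (3 * k ^ 2 + 1))) <= 24 / k.
Proof.
  intros Hk Hb.
  set (P := 3 * k ^ 2 + 1).
  set (A := k ^ 6 - b * P).
  assert (Hk2 : 1 < k^2) by nra.
  assert (Hk3 : 1 < k^3) by (simpl; nra).
  assert (Hk6 : k^6 = (k^3)^2) by ring.
  assert (HA : 0 < A).
  { unfold A, P. assert (k^2 < k^6) by (rewrite Hk6; simpl; nra). nra. }
  split; [exact HA|].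
  set (s := sqrt A).
  assert (Hs0 : 0 <= s) by apply sqrt_pos.
  assert (Hs2 : s * s = A) by (apply sqrt_sqrt; lra).
  assert (Hs3 : s <= k^3).
  { assert (0 < b * P) by (unfold P; nra).
    assert (s*s <= k^3 * k^3) by (rewrite Hs2; unfold A; rewrite Hk6; simpl; nra). nra. }
  assert (Heq : 6 / b * (k ^ 3 - s) = 6 * P / (k^3 + s)).
  { assert (HbP : b * P = (k^3 - s) * (k^3 + s)) by (unfold A in Hs2; rewrite Hk6 in Hs2; simpl in Hs2 |- *; nra).
    assert (HP : P = (k^3 - s) * (k^3 + s) / b) by (rewrite <- HbP; field; lra).
    rewrite HP. field. split; lra. }
  rewrite Heq.
  split.
  - apply (Rmult_le_reg_r (k * (k^3 + s))). nra.
    field_simplify; try lra. unfold P. simpl. nra.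
  - apply (Rmult_le_reg_r (k * (k^3 + s))). nra.
    field_simplify; try lra. unfold P. simpl. nra.
Qed.

Lemma kk_le2 t : 1 <= t -> kk t <= 2.
Proof.
  intro Ht. pose proof (sinh_pos t ltac:(lra)) as Hs.
  unfold kk. apply (Rmult_le_reg_r (sinh t)); auto.
  field_simplify; try lra.
  unfold cosh, sinh. rewrite exp_Ropp.
  set (E := exp t).
  assert (HE : 0 < E) by apply exp_pos.
  assert (H3 : 3 <= E * E).
  { unfold E. rewrite <- exp_plus. pose proof (exp_ineq1 (t + t) ltac:(lra)). lra. }
  apply (Rmult_le_reg_r E); auto.
  field_simplify; lra.
Qed.

Theorem proposition5p6 :
  forall beta : R, 0 < beta < 1 / 4 ->
  exists tau_m tau_s tau_p : R,
    0 < tau_m /\ 0 < tau_s /\ 0 < tau_p /\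
    lam0p beta tau_m > lam1m beta tau_m /\
    lam1m beta tau_p > lam0p beta tau_p /\
    lam1m beta tau_s = lam0p beta tau_s.
Proof.
  intros b Hb.
  set (tm := 1/2). set (tp := 1 + 2/b).
  assert (Htm : 0 < tm) by (unfold tm; lra).
  assert (Htp1 : 1 <= tp).
  { unfold tp. assert (0 < 2 / b) by (apply Rdiv_lt_0_compat; lra). lra. }
  assert (Htp : 0 < tp) by lra.
  destruct (kk_gt tm Htm) as [Km1 Km2].
  destruct (conv b tm ltac:(lra) Htm ltac:(lra)) as [Lm1 Lm0].
  destruct (bnds (kk tm) b Km2 Hb) as [_ [_ Bm]].
  assert (Gm : gg b tm < 0).
  { unfold gg, AA.
    set (k := kk tm) in *.
    assert (24 / k < 4 / b * (k / (tm * k - 1))).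
    { unfold tm in *.
      apply (Rmult_lt_reg_r (b * k * (1/2 * k - 1))). 
      { apply Rmult_lt_0_compat; [apply Rmult_lt_0_compat|]; lra. }
      field_simplify; try lra. nra. }
    lra. }
  destruct (kk_gt tp Htp) as [Kp1 Kp2].
  pose proof (kk_le2 tp Htp1) as Kp3.
  destruct (conv b tp ltac:(lra) Htp ltac:(lra)) as [Lp1 Lp0].
  destruct (bnds (kk tp) b Kp2 Hb) as [_ [Bp _]].
  assert (Gp : 0 < gg b tp).
  { unfold gg, AA.
    set (k := kk tp) in *.
    assert (9 / k >= 9 / 2).
    { apply Rle_ge. apply Rmult_le_compat_l; [lra|]. apply Rinv_le_contravar; lra. }
    assert (HD : 2 / b <= tp * k - 1).
    { unfold tp in *. assert (0 < 2 / b) by (apply Rdiv_lt_0_compat; lra). nra. }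
    assert (4 / b * (k / (tp * k - 1)) <= 4).
    { assert (b * (2 / b) = 2) by (field; lra).
      apply (Rmult_le_reg_r (b * (tp * k - 1))). 
      { apply Rmult_lt_0_compat; lra. }
      field_simplify; try lra. nra. }
    lra. }
  destruct (Ranalysis5.IVT_interv (gg b) tm tp) as [z [[Hz1 Hz2] Hz]].
  - intros a [Ha1 Ha2].
    destruct (kk_gt a ltac:(lra)) as [Ka1 Ka2].
    destruct (bnds (kk a) b Ka2 Hb) as [HA _].
    apply cont_gg; unfold AA; lra.
  - unfold tm. lra.
  - exact Gm.
  - exact Gp.
  - exists tm, z, tp.
    destruct (kk_gt z ltac:(lra)) as [Kz1 Kz2].
    destruct (conv b z ltac:(lra) ltac:(lra) ltac:(lra)) as [Lz1 Lz0].
    unfold gg, AA in Gm, Gp, Hz.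
    repeat split; try lra.
Qed.
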